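(* Let $\mathcal{S}$ be an addable abstract numeration system and let $X\subseteq\mathbb{N}^{\mathbb{N}}$ be a subshift (over a finite subset of $\mathbb{N}$ containing $0$) that is weakly $\mathcal{S}$-codable (resp. $\mathcal{S}$-codable). Let $Y\subseteq B^{\mathbb{N}}$ be a subshift over a finite alphabet $B$, let $\phi\colon Y\to X$ be a conjugacy, and let $b\in B$ with $b^\omega\in Y$ and $\phi(b^\omega)=0^\omega$. Then $Y$ is weakly $\mathcal{S}$-codable (resp. $\mathcal{S}$-codable) with zero symbol $b$, i.e. $\pi(Y)$ is weakly $\mathcal{S}$-codable (resp. $\mathcal{S}$-codable) for a bijection $\pi\colon B\to\{0,\dots,|B|-1\}$ with $\pi(b)=0$.
   Context: Subshifts are one-sided closed shift-invariant sets; a conjugacy is a shift-commuting homeomorphism (equivalently a bijective sliding block code). ANS: $\mathcal{S}=(L,\prec)$ with $L$ an infinite language and $\prec$ a total order of type $\omega$; $\mathrm{rep}(n)$ is the $n$-th word of $L$; tuples are represented by left-padding with a new symbol $\#$; $Z\subseteq\mathbb{N}^d$ is $\mathcal{S}$-recognizable if $\mathrm{rep}(Z)$ is regular; $\mathcal{S}$ is addable if $\{(x,y,x+y)\}$ is $\mathcal{S}$-recognizable. For $\mathbf{y}\in\mathbb{N}^{\mathbb{N}}$: $\sum\mathbf{y}=\sum_iy_i$; if finite, $\nu(\mathbf{y})$ is the unique nondecreasing $(n_1,\dots,n_d)$ with $y_j=|\{k:n_k=j\}|$. Coding dimension of $Z\subseteq\mathbb{N}^{\mathbb{N}}$: least $d$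 bounding $\sum\mathbf{y}$ on $Z$, if it exists. $Z$ is weakly $\mathcal{S}$-codable if for every $k$, $\{\nu(\mathbf{y}):\mathbf{y}\in Z,\sum\mathbf{y}\le k\}$ is $\mathcal{S}$-recognizable in each dimension; $\mathcal{S}$-codable if moreover the coding dimension is finite. *)

(* Defs.v *)
From mathcomp Require Import all_boot.
Set Implicit Arguments. Unset Strict Implicit. Unset Printing Implicit Defensive.

Definition regular (S : finType) (L : seq S -> Prop) : Prop :=
  exists (Q : finType) (q0 : Q) (delta : Q -> S -> Q) (F : pred Q),
    forall w, L w <-> F (foldl delta q0 w).

(* ---------- Abstract numeration systems ----------
   An ANS (L, <) with L an infinite language over a finite alphabet and < a
   total order of type omega is given by its enumeration rep : nat -> seq S,
   rep n = the n-th word of L (an injection; L is its image, < is induced). *)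
Record ANS := { ans_alph : finType;
                rep : nat -> seq ans_alph;
                rep_inj : injective rep }.

(* Representation of a d-tuple: left-pad every component with the new
   symbol # (= None) to the common (maximal) length, read componentwise. *)
Definition rep_tuple (S : ANS) (d : nat) (t : d.-tuple nat)
  : seq {ffun 'I_d -> option (ans_alph S)} :=
  let w i := rep S (tnth t i) in
  let m := \max_(i < d) size (w i) in
  mkseq (fun k => [ffun i => nth None (nseq (m - size (w i)) None ++ map Some (w i)) k]) m.

Definition recognizable (S : ANS) (d : nat) (Z : d.-tuple nat -> Prop) : Prop :=
  regular (fun w => exists t, Z t /\ w = rep_tuple S t).

Definition addable (S : ANS) : Prop :=
  recognizable S (fun t : 3.-tuple nat => nth 0 t 2 = nth 0 t 0 + nth 0 t 1).

Definition agree (A : Type) (n : nat) (x y : nat -> A) := forall i, i < n -> x i = y i.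
Definition shift (A : Type) (x : nat -> A) : nat -> A := fun i => x i.+1.

(* closed in the product topology of discrete A^N *)
Definition closed_set (A : Type) (X : (nat -> A) -> Prop) :=
  forall x, (forall n, exists y, X y /\ agree n x y) -> X x.
Definition subshift (A : Type) (X : (nat -> A) -> Prop) :=
  closed_set X /\ forall x, X x -> X (shift x).

Definition continuous_on (A A' : Type) (X : (nat -> A) -> Prop)
  (f : (nat -> A) -> (nat -> A')) :=
  forall x, X x -> forall n, exists m, forall y, X y -> agree m x y -> agree n (f x) (f y).

Definition conjugacy (A A' : Type) (Y : (nat -> A) -> Prop) (X : (nat -> A') -> Prop)
  (phi : (nat -> A) -> (nat -> A')) :=
  [/\ (forall y, Y y -> X (phi y)),
      (forall y, Y y -> phi (shift y) =1 shift (phi y)),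
      continuous_on Y phi &
      exists psi : (nat -> A') -> (nat -> A),
        [/\ (forall x, X x -> Y (psi x)),
            (forall y, Y y -> psi (phi y) =1 y),
            (forall x, X x -> phi (psi x) =1 x) &
            continuous_on X psi]].

Definition ysum (y : nat -> nat) (s : nat) : Prop :=
  exists N, (forall j, N <= j -> y j = 0) /\ \sum_(j < N) y j = s.

(* nu(y) = t : the unique nondecreasing tuple with y_j = #{k | t_k = j} *)
Definition is_nu (y : nat -> nat) (d : nat) (t : d.-tuple nat) : Prop :=
  sorted leq t /\ forall j, y j = count_mem j t.

Definition weakly_codable (S : ANS) (Z : (nat -> nat) -> Prop) : Prop :=
  forall k d, recognizable S
    (fun t : d.-tuple nat => exists y, [/\ Z y, (exists s, s <= k /\ ysum y s) & is_nu y t]).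

Definition finite_coding_dim (Z : (nat -> nat) -> Prop) : Prop :=
  exists d, forall y, Z y -> exists s, s <= d /\ ysum y s.

Definition codable (S : ANS) (Z : (nat -> nat) -> Prop) : Prop :=
  weakly_codable S Z /\ finite_coding_dim Z.

Definition relabel (B : finType) (pi : B -> 'I_#|B|) (Y : (nat -> B) -> Prop)
  : (nat -> nat) -> Prop :=
  fun x => exists y, Y y /\ forall i, x i = val (pi (y i)).

(* Main.v *)
Require Import Defs.
From mathcomp Require Import all_boot zify.
From Stdlib Require Import Classical ClassicalEpsilon.
Set Implicit Arguments. Unset Strict Implicit. Unset Printing Implicit Defensive.

Definition pb (P : Prop) : bool := if excluded_middle_informative P then true else false.
Lemma pbP (P : Prop) : reflect P (pb P).
Proof. rewrite /pb; case: excluded_middle_informative => H; constructor => //. Qed.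

Section Reg.
Variable T : finType.

Lemma regular_ext (L L' : seq T -> Prop) :
  (forall w, L w <-> L' w) -> regular L -> regular L'.
Proof.
move=> E [Q [q0 [d [F H]]]]; exists Q, q0, d, F => w; rewrite -E; exact: H.
Qed.

Lemma regular_and (L1 L2 : seq T -> Prop) :
  regular L1 -> regular L2 -> regular (fun w => L1 w /\ L2 w).
Proof.
move=> [Q1 [q1 [d1 [F1 H1]]]] [Q2 [q2 [d2 [F2 H2]]]].
exists (Q1 * Q2)%type, (q1, q2), (fun q c => (d1 q.1 c, d2 q.2 c)),
  (fun q => F1 q.1 && F2 q.2) => w.
have -> : foldl (fun q c => (d1 q.1 c, d2 q.2 c)) (q1, q2) w
    = (foldl d1 q1 w, foldl d2 q2 w).
  elim: w q1 q2 {H1 H2} => //= c w IH q1 q2; exact: IH.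
rewrite H1 H2 /=; split; [by case=> -> ->| by move/andP].
Qed.

Lemma regular_not (L : seq T -> Prop) : regular L -> regular (fun w => ~ L w).
Proof.
move=> [Q [q0 [d [F H]]]]; exists Q, q0, d, (fun q => ~~ F q) => w /=.
rewrite H; split; [by move/negP| by move=> /negP].
Qed.

Lemma regular_true : regular (fun _ : seq T => True).
Proof. by exists unit, tt, (fun _ _ => tt), (fun _ => true). Qed.

End Reg.

Section RT.
Variable S : ANS.
Local Notation A := (ans_alph S).
Definition Col n := {ffun 'I_n -> option A}.
Definition allN n : Col n := [ffun _ => None].

Definition wrd n (t : n.-tuple nat) (i : 'I_n) := rep S (tnth t i).
Definition mx n (t : n.-tuple nat) := \max_(i < n) size (wrd t i).
Definition padf (M : nat) (w : seq A) (k : nat) : option A :=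
  if k < M - size w then None else nth None (map Some w) (k - (M - size w)).

Lemma nth_pad M w k : nth None (nseq (M - size w) None ++ map Some w) k = padf M w k.
Proof.
rewrite nth_cat size_nseq /padf; case: ifP => // h; by rewrite nth_nseq h.
Qed.

Lemma rep_tupleE n (t : n.-tuple nat) :
  rep_tuple S t = mkseq (fun k => [ffun i => padf (mx t) (wrd t i) k]) (mx t).
Proof.
rewrite /rep_tuple; apply: eq_mkseq => k; apply/ffunP => i; rewrite !ffunE.
exact: nth_pad.
Qed.

Lemma size_rep n (t : n.-tuple nat) : size (rep_tuple S t) = mx t.
Proof. by rewrite rep_tupleE size_mkseq. Qed.

Lemma nth_rep n (t : n.-tuple nat) k : k < mx t ->
  nth (allN n) (rep_tuple S t) k = [ffun i => padf (mx t) (wrd t i) k].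
Proof. by move=> h; rewrite rep_tupleE nth_mkseq. Qed.

Lemma wrd_le n (t : n.-tuple nat) i : size (wrd t i) <= mx t.
Proof. rewrite /mx; exact: (@leq_bigmax _ (fun i => size (wrd t i)) i). Qed.

Definition comp n (i : 'I_n) (w : seq (Col n)) := map (fun c : Col n => c i) w.

Lemma comp_rep n (t : n.-tuple nat) i :
  comp i (rep_tuple S t) = nseq (mx t - size (wrd t i)) None ++ map Some (wrd t i).
Proof.
have hl := wrd_le t i.
apply: (@eq_from_nth _ None).
  by rewrite size_map size_rep size_cat size_nseq size_map subnK.
move=> k; rewrite size_map size_rep => hk.
by rewrite (nth_map (allN n)) ?size_rep // nth_rep // ffunE nth_pad.
Qed.

Lemma pmap_pad k (w : seq A) : pmap id (nseq k None ++ map Some w) = w.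
Proof. by elim: k => [|k IH] //=; elim: w => //= a w ->. Qed.

Lemma rep_tuple_inj n (t t' : n.-tuple nat) : rep_tuple S t = rep_tuple S t' -> t = t'.
Proof.
move=> E; apply: eq_from_tnth => i; apply: (rep_inj (a:=S)).
have := congr1 (fun w => pmap id (comp i w)) E.
by rewrite /= !comp_rep !pmap_pad.
Qed.

Lemma nth_mapSome (w : seq A) k : k < size w -> nth None (map Some w) k != None.
Proof. by elim: w k => [|a w IH] [|k] //= /IH. Qed.

Definition hasS n (c : Col n) := [exists i, c i != None].

Lemma rep_hasS n (t : n.-tuple nat) : all (@hasS n) (rep_tuple S t).
Proof.
apply/(all_nthP (allN n)) => k; rewrite size_rep => hk.
case: n t hk => [|n] t hk.
  by move: hk; rewrite /mx big_ord0.
have [i0 _ Ei0] := @eq_bigmax_cond _ (fun _ => true) (fun i => size (wrd t i)) ltac:(by rewrite card_ord).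
rewrite nth_rep //; apply/existsP; exists i0; rewrite ffunE /padf.
have E : mx t = size (wrd t i0) by rewrite /mx Ei0.
rewrite E subnn ltn0 subn0; apply: nth_mapSome; by rewrite -E.
Qed.

Definition restr m n (s : 'I_m -> 'I_n) (c : Col n) : Col m := [ffun j => c (s j)].
Definition subt m n (s : 'I_m -> 'I_n) (t : n.-tuple nat) : m.-tuple nat :=
  [tuple tnth t (s j) | j < m].

Lemma mx_subt m n (s : 'I_m -> 'I_n) t : mx (subt s t) <= mx t.
Proof.
apply/bigmax_leqP => j _; rewrite /wrd /subt tnth_mktuple; exact: wrd_le.
Qed.

Lemma padf_shift M' M w k : size w <= M' -> M' <= M ->
  padf M w k = if k < M - M' then None else padf M' w (k - (M - M')).
Proof.
move=> h1 h2; rewrite /padf; case: (ltnP k (M - M')) => h3.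
  by rewrite ifT //; lia.
have -> : (k - (M - M') < M' - size w) = (k < M - size w) by apply/idP/idP; lia.
case: ifP => // _; congr nth; lia.
Qed.

Lemma map_restr_rep m n (s : 'I_m -> 'I_n) (t : n.-tuple nat) :
  map (restr s) (rep_tuple S t) =
  nseq (mx t - mx (subt s t)) (allN m) ++ rep_tuple S (subt s t).
Proof.
have hm := mx_subt s t.
apply: (@eq_from_nth _ (allN m)).
  by rewrite size_map size_cat size_nseq !size_rep subnK.
move=> k; rewrite size_map size_rep => hk.
rewrite (nth_map (allN n)) ?size_rep // nth_rep // nth_cat size_nseq.
case: ifP => hk2.
  rewrite nth_nseq hk2; apply/ffunP => j; rewrite !ffunE.
  have E : wrd (subt s t) j = wrd t (s j) by rewrite /wrd /subt tnth_mktuple.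
  rewrite (@padf_shift (mx (subt s t))) ?hk2 // -?E //; exact: wrd_le.
rewrite nth_rep; last by lia.
apply/ffunP => j; rewrite !ffunE.
have E : wrd (subt s t) j = wrd t (s j) by rewrite /wrd /subt tnth_mktuple.
rewrite (@padf_shift (mx (subt s t))) ?hk2 // -?E //; exact: wrd_le.
Qed.

Definition ext n (a : option A) (c : Col n) : Col n.+1 :=
  [ffun i => if unlift ord0 i is Some j then c j else a].

Lemma restr_ext n a (c : Col n) : restr (lift ord0) (ext a c) = c.
Proof. by apply/ffunP => j; rewrite !ffunE liftK. Qed.

Lemma ext_eta n (c : Col n.+1) : ext (c ord0) (restr (lift ord0) c) = c.
Proof.
apply/ffunP => i; rewrite !ffunE; case: unliftP => [j ->|->] //; by rewrite ffunE.
Qed.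

Lemma subt_cons n a (t : n.-tuple nat) : subt (lift ord0) [tuple of a :: t] = t.
Proof. by apply: eq_from_tnth => j; rewrite /subt tnth_mktuple tnthS. Qed.

Definition zext n (as_ : seq (option A)) (w : seq (Col n)) : seq (Col n.+1) :=
  map (fun p => ext p.1 p.2) (zip as_ w).

Lemma map_restr_zext n as_ (w : seq (Col n)) : size as_ = size w ->
  map (restr (lift ord0)) (zext as_ w) = w.
Proof.
elim: as_ w => [|a as_ IH] [|c w] //= [h]; by rewrite restr_ext IH.
Qed.

Lemma zext_cat n a1 a2 (w1 w2 : seq (Col n)) : size a1 = size w1 ->
  zext (a1 ++ a2) (w1 ++ w2) = zext a1 w1 ++ zext a2 w2.
Proof. by move=> h; rewrite /zext zip_cat // map_cat. Qed.

Lemma rep_cons n a (t : n.-tuple nat) :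
  rep_tuple S [tuple of a :: t] =
  zext (comp ord0 (rep_tuple S [tuple of a :: t]))
       (nseq (mx [tuple of a :: t] - mx t) (allN n) ++ rep_tuple S t).
Proof.
have E := map_restr_rep (lift ord0) [tuple of a :: t]; rewrite subt_cons in E.
rewrite -E; set W := rep_tuple S _.
rewrite /zext /comp zip_map -map_comp.
rewrite -{1}(map_id W); apply: eq_map => c /=; by rewrite ext_eta.
Qed.

Lemma nseq_cat_inj (T : eqType) (x : T) k k' (u v : seq T) :
  (forall c, ohead u = Some c -> c != x) -> (forall c, ohead v = Some c -> c != x) ->
  nseq k x ++ u = nseq k' x ++ v -> u = v.
Proof.
move=> hu hv; elim: k k' => [|k IH] [|k'] //=.
- by move=> E; have := hu x; rewrite E /= eqxx => /(_ erefl).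
- by move=> E; have := hv x; rewrite -E /= eqxx => /(_ erefl).
- by case=> /IH.
Qed.

Lemma rep_head n (t : n.-tuple nat) c : ohead (rep_tuple S t) = Some c -> c != allN n.
Proof.
have := rep_hasS t; case: (rep_tuple S t) => //= c' w /andP[h _] [<-].
apply: contraL h => /eqP ->; apply/existsP => -[i]; by rewrite ffunE.
Qed.

Definition recognizableN n (P : n.-tuple nat -> Prop) := recognizable S P.

Lemma rec_ext n (P Q : n.-tuple nat -> Prop) :
  (forall t, P t <-> Q t) -> recognizable S P -> recognizable S Q.
Proof.
move=> E; apply: regular_ext => w; split=> -[t [h ->]]; exists t; split => //; exact/E.
Qed.

Lemma rec_and n (P Q : n.-tuple nat -> Prop) :
  recognizable S P -> recognizable S Q -> recognizable S (fun t => P t /\ Q t).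
Proof.
move=> hP hQ; apply: regular_ext (regular_and hP hQ) => w; split.
  by case=> -[t [h1 ->]] [t' [h2 /rep_tuple_inj E]]; exists t; subst; split.
by case=> t [[h1 h2] ->]; split; exists t.
Qed.

Section Proj.
Variables (n : nat) (P : n.+1.-tuple nat -> Prop).
Variables (Q : finType) (q0 : Q) (d : Q -> Col n.+1 -> Q) (F : pred Q).

Definition stepP (S0 : {set Q}) (c : Col n) : {set Q} :=
  [set q' | pb (exists q a, q \in S0 /\ q' = d q (ext a c))].
Definition flag (h : option bool) (c : Col n) := if h is None then Some (hasS c) else h.

Lemma run_set S0 w q : q \in foldl stepP S0 w <->
  exists q1 as_, [/\ q1 \in S0, size as_ = size w & q = foldl d q1 (zext as_ w)].
Proof.
elim: w S0 => [|c w IH] S0 /=.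
  split; first by move=> h; exists q, [::].
  by case=> q1 [as_ [h hs ->]]; case: as_ hs.
rewrite IH; split.
  case=> q1 [as_ [h1 h2 ->]]; move: h1; rewrite inE => /pbP [q2 [a [h3 ->]]].
  by exists q2, (a :: as_); split => //=; rewrite h2.
case=> q1 [as_ [h1 hs ->]]; case: as_ hs => [//|a as_ [h2]].
exists (d q1 (ext a c)), as_; split => //; rewrite inE; apply/pbP; by exists q1, a.
Qed.

Lemma flag_run w : foldl flag None w = if w is c :: _ then Some (hasS c) else None.
Proof.
case: w => //= c w; elim: w (hasS c) => //.
Qed.
End Proj.

Lemma rec_ex n (P : n.+1.-tuple nat -> Prop) : recognizable S P ->
  recognizable S (fun t : n.-tuple nat => exists a, P [tuple of a :: t]).
Proof.
move=> [Q [q0 [d [F H]]]].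
pose S0 : {set Q} := [set q | pb (exists as_, q = foldl d q0 (zext as_ (nseq (size as_) (allN n))))].
exists ({set Q} * option bool)%type, (S0, None),
  (fun (p : ({set Q} * option bool)%type) (c : Col n) => (stepP d p.1 c, @flag n p.2 c)),
  (fun p : ({set Q} * option bool)%type => pb (exists q, q \in p.1 /\ F q) && (p.2 != Some false)) => w.
have -> : forall S1 h, foldl (fun (p : ({set Q} * option bool)%type) (c : Col n) => (stepP d p.1 c, @flag n p.2 c)) (S1, h) w
    = (foldl (stepP d) S1 w, foldl (@flag n) h w).
  by elim: w {H} => //= c w IH S1 h; rewrite IH.
rewrite /= flag_run; split; last first.
- move=> /andP [/pbP [q [/run_set [q1 [as2 [hq1 hs ->]]] hF]] hfl].
  move: hq1; rewrite inE => /pbP [as1 E1]; subst q1.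
  have : F (foldl d q0 (zext (as1 ++ as2) (nseq (size as1) (allN n) ++ w))).
    by rewrite zext_cat ?size_nseq // foldl_cat.
  move=> /H [t1 [hP E]]; move: hP E; case: t1 / tupleP => a t hP E.
  have := congr1 (map (restr (lift ord0))) E.
  rewrite map_restr_zext ?size_cat ?size_nseq ?hs //.
  rewrite map_restr_rep subt_cons => /nseq_cat_inj E2.
  exists t; split; first by exists a.
  apply: E2; last exact: rep_head.
  move: hfl; case: (w) => //= c w0 hfl c' [<-]; apply: contraNneq hfl => ->.
  by apply/eqP; congr Some; apply/negbTE/existsP => -[i]; rewrite ffunE.
- case=> t [[a hP] ->].
  have hW := rep_cons a t; set W := rep_tuple S _ in hW.
  have hFW : F (foldl d q0 W) by apply/H; exists [tuple of a :: t].
  set k := mx _ - mx t in hW; set as_ := comp _ _ in hW.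
  have hsz : size as_ = k + size (rep_tuple S t).
    rewrite /as_ /comp size_map /W !size_rep /k subnK //.
    by have := mx_subt (lift ord0) [tuple of a :: t]; rewrite subt_cons.
  have hk : size (take k as_) = k by rewrite size_take hsz; case: ltnP => //; lia.
  rewrite -(cat_take_drop k as_) zext_cat in hW; last by rewrite hk size_nseq.
  rewrite hW foldl_cat in hFW.
  apply/andP; split.
    apply/pbP; eexists; split; last exact: hFW.
    apply/run_set; eexists; eexists; split; last reflexivity.
      rewrite inE; apply/pbP; exists (take k as_).
      by rewrite hk.
    by rewrite size_drop hsz addKn.
  have := rep_hasS t; case: (rep_tuple S t) => //= c w' /andP [h _].
  by rewrite h.
Qed.

Lemma rec_true1 : addable S -> recognizable S (fun _ : 1.-tuple nat => True).
Proof.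
move=> /(@rec_ex 2) /(@rec_ex 1) H; apply: rec_ext H => t; split => // _.
by exists 0, (nth 0 t 0) => /=; rewrite addn0.
Qed.

Definition col1 (o : option A) : Col 1 := [ffun _ => o].

Lemma rep1 (t : 1.-tuple nat) : rep_tuple S t = map col1 (map Some (rep S (tnth t ord0))).
Proof.
have E := comp_rep t ord0.
have hm : mx t = size (wrd t ord0).
  by apply/eqP; rewrite eqn_leq wrd_le andbT /mx; apply/bigmax_leqP => i _; rewrite (ord1 i).
rewrite hm subnn /= in E; rewrite /wrd in E; rewrite -E /comp -map_comp.
rewrite -{1}(map_id (rep_tuple S t)); apply: eq_map => c /=.
by apply/ffunP => i; rewrite ffunE (ord1 i).
Qed.

Lemma eq_from_comps n (w w' : seq (Col n)) : size w = size w' ->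
  (forall i, comp i w = comp i w') -> w = w'.
Proof.
move=> hs E; apply: (@eq_from_nth _ (allN n)) => // k hk.
apply/ffunP => i; have := congr1 (fun s => nth None s k) (E i).
by rewrite /comp !(nth_map (allN n)) // -hs.
Qed.

Section Valid.
Variables (Q1 : finType) (q1 : Q1) (d1 : Q1 -> Col 1 -> Q1) (F1 : pred Q1).
Hypothesis H1 : forall w, (exists t : 1.-tuple nat, True /\ w = rep_tuple S t) <-> F1 (foldl d1 q1 w).

Definition cst := (Q1 * bool * bool)%type.
Definition cstep (s : cst) (o : option A) : cst :=
  let: (q, st, dd) := s in
  if dd then s else if o is Some a then (d1 q (col1 (Some a)), true, false) else (q, st, st).

Lemma cstep_ok q k u : foldl cstep (q, false, false) (nseq k None ++ map Some u)
  = (foldl d1 q (map col1 (map Some u)), u != [::], false).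
Proof.
rewrite foldl_cat; have -> : foldl cstep (q, false, false) (nseq k None) = (q, false, false).
  by elim: k.
elim: u q => //= a u IH q; rewrite /=.
have : forall q', foldl cstep (q', true, false) (map Some u) = (foldl d1 q' (map col1 (map Some u)), true, false).
  by elim: u {IH} => //= b u IH q'; rewrite IH.
by move=> ->.
Qed.

Lemma cstep_inv v q st : foldl cstep (q1, false, false) v = (q, st, false) ->
  exists k u, [/\ v = nseq k None ++ map Some u, q = foldl d1 q1 (map col1 (map Some u))
     & st = (u != [::])].
Proof.
elim/last_ind: v q st => [|v o IH] q st.
  by case=> <- <-; exists 0, [::].
rewrite foldl_rcons; case E: (foldl cstep _ v) => [[q' st'] dd'].
case: dd' E => E /=; first by move=> [_ _ ].
have [k [u [-> -> ->]]] := IH _ _ E.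
case: o => [a|] /=.
  case=> <- <-; exists k, (rcons u a); split => //.
    by rewrite map_rcons rcons_cat.
  by rewrite !map_rcons foldl_rcons.
  by case: u.
case=> <- <- hst; case: u hst => //= _.
by exists k.+1, [::]; split => //=; rewrite cats0; elim: k => //= k ->.
Qed.

Definition vstep n (p : ({ffun 'I_n -> cst} * option bool)%type) (c : Col n) :=
  ([ffun i => cstep (p.1 i) (c i)], flag p.2 c).

Lemma vrun n (f : {ffun 'I_n -> cst}) h w :
  foldl (@vstep n) (f, h) w = ([ffun i => foldl cstep (f i) (comp i w)], foldl (@flag n) h w).
Proof.
elim: w f h => [|c w IH] f h /=; first by congr pair; apply/ffunP => i; rewrite ffunE.
rewrite IH; congr pair; apply/ffunP => i; by rewrite !ffunE.
Qed.

Lemma rec_valid_aux n : recognizable S (fun _ : n.-tuple nat => True).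
Proof.
exists ({ffun 'I_n -> cst} * option bool)%type, ([ffun _ => (q1, false, false)], None), (@vstep n),
  (fun p : ({ffun 'I_n -> cst} * option bool)%type => [forall i, ~~ (p.1 i).2 && F1 (p.1 i).1.1] && (p.2 != Some false)) => w.
rewrite vrun /= flag_run; split.
- case=> t [_ ->]; apply/andP; split; last first.
    by have := rep_hasS t; case: (rep_tuple S t) => //= c w' /andP [h _]; rewrite h.
  apply/forallP => i; rewrite !ffunE comp_rep cstep_ok /=.
  apply/H1; exists [tuple tnth t i]; split => //.
  by rewrite rep1 /wrd (tnth_nth 0).
- move=> /andP [/forallP hf hfl].
  have : forall i, exists p : nat * nat,
      comp i w = nseq p.2 None ++ map Some (rep S p.1).
    move=> i; move: (hf i); rewrite !ffunE.
    case E: (foldl cstep _ _) => [[q st] dd] /= /andP [hdd hF].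
    move: hdd E; case: dd => // _ /cstep_inv [k [u [-> hq _]]].
    move: hF; rewrite hq -H1 => -[t [_ ht]].
    exists (tnth t ord0, k); congr cat; rewrite rep1 in ht.
    apply: (inj_map _ ht) => o o' /ffunP /(_ ord0).
    by rewrite !ffunE.
  move=> /fin_all_exists [g hg].
  exists [tuple (g i).1 | i < n]; split => //.
  have hsz : forall i, size w = (g i).2 + size (rep S (g i).1).
    by move=> i; rewrite -(size_map (fun c : Col n => c i)) -/(comp i w) hg size_cat size_nseq size_map.
  set t := [tuple _ | _ < _].
  have hwt : forall i, wrd t i = rep S (g i).1 by move=> i; rewrite /wrd tnth_mktuple.
  have hmx : mx t = size w.
    apply/eqP; rewrite eqn_leq; apply/andP; split.
      rewrite /mx; apply/bigmax_leqP => i _; rewrite hwt (hsz i); exact: leq_addl.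
    move: hfl; case E: w => [|c w'] //= hfl.
    have : hasS c by case: (hasS c) hfl.
    move=> /existsP [i hi].
    have hk : (g i).2 = 0.
      move: (hg i); rewrite E /=; case: ((g i).2) => //= k [hh]; by rewrite hh in hi.
    have := hsz i; rewrite E /= => ->; rewrite hk add0n -hwt; exact: wrd_le.
  apply: eq_from_comps; first by rewrite size_rep hmx.
  move=> i; rewrite hg comp_rep hwt hmx (hsz i) addnK //.
Qed.
End Valid.

Lemma rec_valid n : addable S -> recognizable S (fun _ : n.-tuple nat => True).
Proof. move=> /rec_true1 [Q1 [q1 [d1 [F1 H1]]]]; exact: (rec_valid_aux H1 n). Qed.

Lemma rec_not n (P : n.-tuple nat -> Prop) : addable S ->
  recognizable S P -> recognizable S (fun t => ~ P t).
Proof.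
move=> ha hP; apply: regular_ext (regular_and (regular_not hP) (rec_valid n ha)) => w.
split.
  case=> hn [t [_ E]]; subst w; exists t; split=> [hp|//]; apply: hn; by exists t; split.
case=> t [hn ->]; split; last by exists t.
by case=> t' [hp /rep_tuple_inj E]; subst.
Qed.

Lemma hasS_neq n (c : Col n) : hasS c -> c != allN n.
Proof. move=> /existsP [i hi]; apply: contraNneq hi => ->; by rewrite ffunE. Qed.

Lemma rec_rename m n (s : 'I_m -> 'I_n) (R : m.-tuple nat -> Prop) : addable S ->
  recognizable S R -> recognizable S (fun t : n.-tuple nat => R (subt s t)).
Proof.
move=> ha [Q [q0 [d [F H]]]].
pose skip q (c : Col m) := if c == allN m then q else d q c.
have hskip : forall q k u, all (fun c => c != allN m) u ->
    foldl skip q (nseq k (allN m) ++ u) = foldl d q u.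
  move=> q k u hu; rewrite foldl_cat.
  have -> : foldl skip q (nseq k (allN m)) = q by elim: k => //= k; rewrite /skip eqxx.
  elim: u q hu => //= c u IH q /andP [hc hu]; by rewrite /skip (negbTE hc) IH.
have hL : regular (fun w : seq (Col n) => F (foldl skip q0 (map (restr s) w))).
  exists Q, q0, (fun q c => skip q (restr s c)), F => w.
  suff gen : forall q, foldl (fun q c => skip q (restr s c)) q w = foldl skip q (map (restr s) w) by rewrite gen.
  by elim: w => //= c w IH q; rewrite IH.
apply: regular_ext (regular_and hL (rec_valid n ha)) => w; split.
  case=> hF [t [_ E]]; exists t; split => //; subst w.
  move: hF; rewrite map_restr_rep hskip; last first.
    by apply/allP => c hc; apply: hasS_neq; move/allP: (rep_hasS (subt s t)); apply.
  by move=> /H [t' [hR /rep_tuple_inj ->]].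
case=> t [hR ->]; split; last by exists t.
rewrite map_restr_rep hskip; last first.
  by apply/allP => c hc; apply: hasS_neq; move/allP: (rep_hasS (subt s t)); apply.
by apply/H; exists (subt s t).
Qed.
End RT.


Section Form.
Variable S : ANS.
Hypothesis ha : addable S.

Inductive form : Type :=
| FTrue
| FAtom (m : nat) (R : m.-tuple nat -> Prop) (HR : recognizable S R) (vs : m.-tuple nat)
| FNot (f : form)
| FAnd (f g : form)
| FEx (f : form).

Definition scons (a : nat) (e : nat -> nat) (i : nat) := if i is j.+1 then e j else a.

Fixpoint sem (f : form) (e : nat -> nat) : Prop :=
  match f with
  | FTrue => True
  | FAtom m R _ vs => R (map_tuple e vs)
  | FNot f => ~ sem f e
  | FAnd f g => sem f e /\ sem g e
  | FEx f => exists a, sem f (scons a e)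
  end.

Fixpoint wf (n : nat) (f : form) : bool :=
  match f with
  | FTrue => true
  | FAtom _ _ _ vs => all (fun v => v < n) vs
  | FNot f => wf n f
  | FAnd f g => wf n f && wf n g
  | FEx f => wf n.+1 f
  end.

Lemma sem_ext f e e' : e =1 e' -> (sem f e <-> sem f e').
Proof.
elim: f e e' => [|m R HR vs|f IH|f IHf g IHg|f IH] e e' E /=.
- done.
- by have -> : map_tuple e vs = map_tuple e' vs by apply: eq_from_tnth => j; rewrite !tnth_map E.
- by rewrite (IH _ _ E).
- by rewrite (IHf _ _ E) (IHg _ _ E).
- have E' : forall a, scons a e =1 scons a e' by move=> a [|i] //=.
  split=> -[a h]; exists a; move: h; by rewrite (IH _ _ (E' a)).
Qed.

Lemma sem_extW f e e' : sem f e -> e =1 e' -> sem f e'.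
Proof. by move=> h E; apply/(sem_ext _ E). Qed.

Lemma compile f n : wf n f -> recognizable S (fun t : n.-tuple nat => sem f (nth 0 t)).
Proof.
elim: f n => [|m R HR vs|f IH|f IHf g IHg|f IH] n /=.
- move=> _; exact: rec_valid.
- move=> /allP hv.
  have hv' : forall j, tnth vs j < n by move=> j; apply: hv; exact: mem_tnth.
  pose s := fun j => Ordinal (hv' j).
  apply: rec_ext (rec_rename s ha HR) => t.
  have -> : subt s t = map_tuple (nth 0 t) vs by apply: eq_from_tnth => j; rewrite /subt tnth_mktuple tnth_map (tnth_nth 0).
  by [].
- move=> /IH h; exact: rec_not.
- by move=> /andP [/IHf h1 /IHg h2]; exact: rec_and.
- move=> /IH /rec_ex h; apply: rec_ext h => t.
  have E : forall a, nth 0 [tuple of a :: t] =1 scons a (nth 0 t) by move=> a [|i].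
  split=> -[a h]; exists a; move: h; by rewrite (sem_ext _ (E a)).
Qed.

Definition FFalse := FNot FTrue.
Definition FOr f g := FNot (FAnd (FNot f) (FNot g)).
Definition FAll f := FNot (FEx (FNot f)).
Definition FBigAnd (l : seq form) := foldr FAnd FTrue l.
Definition FBigOr (l : seq form) := foldr FOr FFalse l.

Lemma sem_or f g e : sem (FOr f g) e <-> sem f e \/ sem g e.
Proof. rewrite /=; tauto. Qed.
Lemma sem_all f e : sem (FAll f) e <-> forall a, sem f (scons a e).
Proof.
rewrite /=; split; last by move=> h [a]; apply.
by move=> h a; apply: NNPP => hn; apply: h; exists a.
Qed.
Lemma sem_bigand (T : eqType) (g : T -> form) s e :
  sem (FBigAnd (map g s)) e <-> forall x, x \in s -> sem (g x) e.
Proof.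
elim: s => [|x s IH] /=; first by split.
rewrite IH; split; first by move=> [h1 h2] y; rewrite inE => /orP [/eqP ->|/h2].
by move=> h; split; [apply: h; rewrite inE eqxx | move=> y hy; apply: h; rewrite inE hy orbT].
Qed.

Lemma sem_bigor (T : eqType) (g : T -> form) s e :
  sem (FBigOr (map g s)) e <-> exists2 x, x \in s & sem (g x) e.
Proof.
elim: s => [|x s IH].
  by split=> [h|[x]//]; exfalso; apply: h.
have -> : FBigOr (map g (x :: s)) = FOr (g x) (FBigOr (map g s)) by [].
rewrite sem_or IH; split.
  case=> [h|[y hy h]]; first by exists x; rewrite ?inE ?eqxx.
  by exists y; rewrite // inE hy orbT.
by case=> y; rewrite inE => /orP [/eqP ->|hy h]; [left|right; exists y].
Qed.

Lemma wf_bigand (T : eqType) (g : T -> form) s n :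
  (forall x, x \in s -> wf n (g x)) -> wf n (FBigAnd (map g s)).
Proof.
elim: s => //= x s IH h; rewrite h ?inE ?eqxx //= IH // => y hy; apply: h; by rewrite inE hy orbT.
Qed.

Lemma wf_bigor (T : eqType) (g : T -> form) s n :
  (forall x, x \in s -> wf n (g x)) -> wf n (FBigOr (map g s)).
Proof.
elim: s => //= x s IH h; rewrite h ?inE ?eqxx //= IH // => y hy; apply: h; by rewrite inE hy orbT.
Qed.

Definition AddR (t : 3.-tuple nat) := nth 0 t 2 = nth 0 t 0 + nth 0 t 1.
Definition FAdd i j k := FAtom (R := AddR) ha [tuple i; j; k].

Definition EqR (t : 2.-tuple nat) := nth 0 t 0 = nth 0 t 1.
Definition LeR (t : 2.-tuple nat) := nth 0 t 0 <= nth 0 t 1.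
Definition LtR (t : 2.-tuple nat) := nth 0 t 0 < nth 0 t 1.
Definition SuccR (t : 2.-tuple nat) := nth 0 t 1 = (nth 0 t 0).+1.
Definition PCR o (t : 2.-tuple nat) := nth 0 t 1 = nth 0 t 0 + o.

Lemma rec_Eq : recognizable S EqR.
Proof.
have := @compile (FEx (FAnd (FAdd 0 0 0) (FAdd 1 0 2))) 2 erefl.
apply: rec_ext => t /=; rewrite /AddR /EqR /=; split.
  by case=> a [h1 h2]; lia.
by move=> h; exists 0; lia.
Qed.

Lemma rec_Le : recognizable S LeR.
Proof.
have := @compile (FEx (FAdd 1 0 2)) 2 erefl.
apply: rec_ext => t /=; rewrite /AddR /LeR /=; split.
  by case=> a h; lia.
by move=> h; exists (nth 0 t 1 - nth 0 t 0); lia.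
Qed.

Lemma rec_Lt : recognizable S LtR.
Proof.
have := @compile (FEx (FAnd (FNot (FAdd 0 0 0)) (FAdd 1 0 2))) 2 erefl.
apply: rec_ext => t /=; rewrite /AddR /LtR /=; split.
  by case=> a [h1 h2]; lia.
by move=> h; exists (nth 0 t 1 - nth 0 t 0); split; lia.
Qed.

Definition FLt i j := FAtom rec_Lt [tuple i; j].

Lemma rec_Succ : recognizable S SuccR.
Proof.
have := @compile (FAnd (FLt 0 1) (FNot (FEx (FAnd (FLt 1 0) (FLt 0 2))))) 2 erefl.
apply: rec_ext => t /=; rewrite /LtR /SuccR /=; split.
  case=> h1 h2; apply/eqP; rewrite eqn_leq h1 andbT; apply/negP => h3.
  apply: h2; exists (nth 0 t 0).+1; lia.
by move=> h; split; [lia| case=> a; lia].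
Qed.

Lemma rec_PC o : recognizable S (PCR o).
Proof.
elim: o => [|o IH].
  by apply: rec_ext rec_Eq => t; rewrite /EqR /PCR addn0; split => ->.
have := @compile (FEx (FAnd (FAtom IH [tuple 1; 0]) (FAtom rec_Succ [tuple 0; 2]))) 2 erefl.
apply: rec_ext => t /=; rewrite /PCR /SuccR /=; split.
  by case=> a [h1 h2]; lia.
by move=> h; exists (nth 0 t 0 + o); lia.
Qed.

Definition FExN k f := iter k FEx f.
Definition catenv (l : seq nat) (e : nat -> nat) (i : nat) :=
  if i < size l then nth 0 l i else e (i - size l).

Lemma sem_exN k f e : sem (FExN k f) e <-> exists l, size l = k /\ sem f (catenv l e).
Proof.
elim: k e => [|k IH] e /=.
  split; first by move=> h; exists [::]; split => //; apply: (sem_extW h) => i; rewrite /catenv subn0.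
  case=> l [hl h]; case: l hl h => // _ h; apply: (sem_extW h) => i; by rewrite /catenv subn0.
split.
  case=> a /IH [l [hl h]]; exists (rcons l a); split; first by rewrite size_rcons hl.
  apply: (sem_extW h) => i; rewrite /catenv size_rcons nth_rcons.
  case: (ltngtP i (size l)) => hi.
  - by rewrite ltnS ltnW.
  - rewrite ifF; last by lia.
    by have -> : i - size l = (i - (size l).+1).+1 by lia.
  - by rewrite hi ltnSn subnn.
case=> l' [hl' h]; case/lastP: l' hl' h => [//|l a] hl h.
exists a; apply/IH; exists l; split; first by rewrite size_rcons in hl; case: hl.
apply: (sem_extW h) => i; rewrite /catenv size_rcons nth_rcons.
case: (ltngtP i (size l)) => hi.
- by rewrite ltnS ltnW.
- rewrite ifF; last by lia.
  by have -> : i - size l = (i - (size l).+1).+1 by lia.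
- by rewrite hi ltnSn subnn.
Qed.

Lemma wf_exN k f n : wf n (FExN k f) = wf (k + n) f.
Proof. by elim: k n => //= k IH n; rewrite IH addnS. Qed.

Fixpoint bools K : seq (seq bool) :=
  if K is K'.+1 then [seq b :: l | b <- [:: true; false], l <- bools K'] else [:: [::]].

Lemma mem_bools l : l \in bools (size l).
Proof.
elim: l => [|b l IH] //.
change (b :: l \in [seq b0 :: l0 | b0 <- [:: true; false], l0 <- bools (size l)]).
apply/allpairsP; exists (b, l) => /=; split => //.
by case: b.
Qed.

Definition FCount (a : nat -> form) K c :=
  FBigOr (map (fun bs => FBigAnd (map (fun k => if nth false bs k then a k else FNot (a k)) (iota 0 K)))
     [seq bs <- bools K | count id bs == c]).

Lemma count_nth_bools (bs : seq bool) : count id bs = count (nth false bs) (iota 0 (size bs)).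
Proof. by rewrite -{1}(mkseq_nth false bs) /mkseq count_map. Qed.

Lemma size_bools K l : l \in bools K -> size l = K.
Proof.
elim: K l => [|K IH] l; first by rewrite inE => /eqP ->.
move=> hl; have : l \in [seq b :: l0 | b <- [:: true; false], l0 <- bools K] by [].
by move=> /allpairsP [[b l'] [_ /IH h ->]] /=; rewrite h.
Qed.

Lemma sem_count a K c e :
  sem (FCount a K c) e <-> count (fun k => pb (sem (a k) e)) (iota 0 K) = c.
Proof.
rewrite /FCount sem_bigor; split.
  case=> bs; rewrite mem_filter => /andP [/eqP hc hb] /sem_bigand h.
  rewrite -hc count_nth_bools (size_bools hb); apply: eq_in_count => k hk.
  have := h k hk; case: (nth false bs k) => hs; case: pbP => //.
move=> hc; exists [seq pb (sem (a k) e) | k <- iota 0 K].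
  rewrite mem_filter count_map hc eqxx /=.
  by have := mem_bools [seq pb (sem (a k) e) | k <- iota 0 K]; rewrite size_map size_iota.
apply/sem_bigand => k hk; have hk' : k < K by move: hk; rewrite mem_iota.
rewrite (nth_map 0); last by rewrite size_iota.
rewrite nth_iota //.
by rewrite add0n; case: pbP.
Qed.

Lemma wf_count a K c n : (forall k, k < K -> wf n (a k)) -> wf n (FCount a K c).
Proof.
move=> h; apply: wf_bigor => bs _; apply: wf_bigand => k; rewrite mem_iota add0n => hk.
by case: (nth false bs k) => /=; apply: h.
Qed.

Lemma count_pb (P : nat -> Prop) (p : pred nat) s : (forall k, P k <-> p k) ->
  count (fun k => pb (P k)) s = count p s.
Proof. move=> h; apply: eq_count => k; apply/idP/idP => [/pbP /h //|/h hp]; exact/pbP. Qed.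


Fixpoint ctuples K m : seq (seq nat) :=
  if K is K'.+1 then [seq c :: l | c <- iota 0 m.+1, l <- ctuples K' m] else [:: [::]].

Lemma mem_ctuples m l : all (fun c => c <= m) l -> l \in ctuples (size l) m.
Proof.
elim: l => [|c l IH] // /andP [hc hl].
change (c :: l \in [seq c0 :: l0 | c0 <- iota 0 m.+1, l0 <- ctuples (size l) m]).
apply/allpairsP; exists (c, l) => /=; split => //; last exact: IH.
by rewrite -[0 :: iota 1 m]/(iota 0 m.+1) mem_iota.
Qed.

Lemma size_ctuples K m l : l \in ctuples K m -> size l = K.
Proof.
elim: K l => [|K IH] l; first by rewrite inE => /eqP ->.
move=> hl; have : l \in [seq c :: l0 | c <- iota 0 m.+1, l0 <- ctuples K m] by [].
by move=> /allpairsP [[b l'] [_ /IH h ->]] /=; rewrite h.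
Qed.

Lemma sorted_nth (l : seq nat) :
  sorted leq l <-> forall j, j.+1 < size l -> nth 0 l j <= nth 0 l j.+1.
Proof.
case: l => [|x p] //=; split.
  by move=> /(pathP 0) h j hj; apply: h.
by move=> h; apply/(pathP 0) => j hj; apply: h.
Qed.

Definition iotaT m : m.-tuple nat := Tuple (introT eqP (size_iota 0 m)).

Section Main.
Variables (m d s : nat) (Fw : seq nat -> nat) (TX : m.-tuple nat -> Prop).
Hypothesis HX : recognizable S TX.

Definition TXa := FAtom HX (iotaT m).
Definition Sorted := FBigAnd (map (fun j => FAtom rec_Le [tuple m + j; m + j.+1]) (iota 0 d.-1)).
Definition CntU o c := FCount (fun i => FAtom (rec_PC o) [tuple 0; i.+1]) m c.
Definition CntT c := FCount (fun j => FAtom rec_Eq [tuple 0; (m + j).+1]) d c.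
Definition Inner := FAll (FBigOr (map (fun cs =>
   FAnd (FBigAnd (map (fun o => CntU o (nth 0 cs o)) (iota 0 s.+1))) (CntT (Fw cs)))
   (ctuples s.+1 m))).
Definition Phi := FExN m (FAnd (FAnd TXa Sorted) Inner).

Lemma wf_and n f g : wf n (FAnd f g) = wf n f && wf n g. Proof. by []. Qed.

Lemma wf_Phi : wf d Phi.
Proof.
rewrite /Phi wf_exN.
have h1 : wf (m + d) TXa.
  by apply/allP => v /=; rewrite mem_iota add0n => hv; apply: leq_trans hv (leq_addr _ _).
have h2 : wf (m + d) Sorted.
  apply: wf_bigand => j; rewrite mem_iota add0n => hj /=; rewrite ?andbT; repeat (apply/andP; split); lia.
have h3 : wf (m + d) Inner.
  change (wf (m + d).+1 (FBigOr (map (fun cs =>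
   FAnd (FBigAnd (map (fun o => CntU o (nth 0 cs o)) (iota 0 s.+1))) (CntT (Fw cs)))
   (ctuples s.+1 m)))).
  apply: wf_bigor => cs _; rewrite wf_and; apply/andP; split.
    apply: wf_bigand => o _; apply: wf_count => i hi /=; rewrite ?andbT; repeat (apply/andP; split); lia.
  apply: wf_count => j hj /=; rewrite ?andbT; repeat (apply/andP; split); lia.
change (wf (m + d) TXa && wf (m + d) Sorted && wf (m + d) Inner).
by rewrite h1 h2 h3.
Qed.

Lemma sem_Phi (t : d.-tuple nat) : sem Phi (nth 0 t) <->
  exists u : m.-tuple nat, [/\ TX u, sorted leq t &
    forall q, count_mem q t = Fw [seq count_mem (q + o) u | o <- iota 0 s.+1]].
Proof.
rewrite sem_exN; split.
- case=> l [hl [[hTX hS] hI]].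
  set e := catenv l (nth 0 t) in hTX hS hI.
  have ei : forall i, i < m -> e i = nth 0 l i by move=> i hi; rewrite /e /catenv hl hi.
  have ej : forall j, e (m + j) = nth 0 t j.
    by move=> j; rewrite /e /catenv hl ltnNge leq_addr /= addKn.
  pose u : m.-tuple nat := Tuple (introT eqP hl).
  have hu : map_tuple e (iotaT m) = u.
    apply: val_inj => /=; apply: (@eq_from_nth _ 0); first by rewrite size_map size_iota hl.
    move=> i; rewrite size_map size_iota => hi.
    by rewrite (nth_map 0) ?size_iota // nth_iota // add0n ei.
  have hcu : forall q o, count (fun i => pb (sem (FAtom (rec_PC o) [tuple 0; i.+1]) (scons q e))) (iota 0 m)
      = count_mem (q + o) u.
    move=> q o; rewrite (@count_pb _ (fun i => e i == q + o)); last first.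
      by move=> i /=; rewrite /PCR /=; split => [->|/eqP].
    rewrite -[in RHS](mkseq_nth 0 u) /mkseq count_map size_tuple; apply: eq_in_count => i.
    by rewrite mem_iota add0n /= => hi; rewrite ei.
  have hct : forall q, count (fun j => pb (sem (FAtom rec_Eq [tuple 0; (m + j).+1]) (scons q e))) (iota 0 d)
      = count_mem q t.
    move=> q; rewrite (@count_pb _ (fun j => nth 0 t j == q)); last first.
      by move=> j /=; rewrite /EqR /= ej; split => [->|/eqP ->].
    by rewrite -[in RHS](mkseq_nth 0 t) /mkseq count_map size_tuple.
  exists u; split.
  + by rewrite -hu.
  + apply/sorted_nth => j; rewrite size_tuple => hj.
    move/sem_bigand: hS => /(_ j); rewrite mem_iota add0n => /(_ ltac:(lia)) /=.
    by rewrite /LeR /= -!ej addnS.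
  + move=> q; move/sem_all: hI => /(_ q) /sem_bigor [cs hcs H].
    have [hU hT] : sem (FBigAnd (map (fun o => CntU o (nth 0 cs o)) (iota 0 s.+1))) (scons q e)
       /\ sem (CntT (Fw cs)) (scons q e) := H.
    move/sem_bigand: hU => hU; rewrite /CntT sem_count in hT.
    rewrite -hct hT; congr Fw; apply: (@eq_from_nth _ 0).
      by rewrite size_map size_iota (size_ctuples hcs).
    move=> o; rewrite (size_ctuples hcs) => ho.
    rewrite (nth_map 0) ?size_iota // nth_iota // add0n.
    by have := hU o; rewrite mem_iota add0n => /(_ ho); rewrite /CntU sem_count => <-; rewrite hcu.
- case=> u [hTX hS hI]; exists u; split; first by rewrite size_tuple.
  set e := catenv u (nth 0 t).
  have ei : forall i, i < m -> e i = nth 0 u i by move=> i hi; rewrite /e /catenv size_tuple hi.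
  have ej : forall j, e (m + j) = nth 0 t j.
    by move=> j; rewrite /e /catenv size_tuple ltnNge leq_addr /= addKn.
  have hu : map_tuple e (iotaT m) = u.
    apply: val_inj => /=; apply: (@eq_from_nth _ 0); first by rewrite size_map size_iota size_tuple.
    move=> i; rewrite size_map size_iota => hi.
    by rewrite (nth_map 0) ?size_iota // nth_iota // add0n ei.
  have hcu : forall q o, count (fun i => pb (sem (FAtom (rec_PC o) [tuple 0; i.+1]) (scons q e))) (iota 0 m)
      = count_mem (q + o) u.
    move=> q o; rewrite (@count_pb _ (fun i => e i == q + o)); last first.
      by move=> i /=; rewrite /PCR /=; split => [->|/eqP].
    rewrite -[in RHS](mkseq_nth 0 u) /mkseq count_map size_tuple; apply: eq_in_count => i.
    by rewrite mem_iota add0n /= => hi; rewrite ei.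
  have hct : forall q, count (fun j => pb (sem (FAtom rec_Eq [tuple 0; (m + j).+1]) (scons q e))) (iota 0 d)
      = count_mem q t.
    move=> q; rewrite (@count_pb _ (fun j => nth 0 t j == q)); last first.
      by move=> j /=; rewrite /EqR /= ej; split => [->|/eqP ->].
    by rewrite -[in RHS](mkseq_nth 0 t) /mkseq count_map size_tuple.
  split; first split.
  + by rewrite /= hu.
  + apply/sem_bigand => j; rewrite mem_iota add0n => hj /=.
    rewrite /LeR /= !ej; move/sorted_nth: hS; apply; rewrite size_tuple; lia.
  + apply/sem_all => q; apply/sem_bigor.
    exists [seq count_mem (q + o) u | o <- iota 0 s.+1].
      have := mem_ctuples (m := m) (l := [seq count_mem (q + o) u | o <- iota 0 s.+1]).
      rewrite size_map size_iota; apply; apply/allP => c /mapP [o _ ->].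
      by apply: leq_trans (count_size _ _) _; rewrite size_tuple.
    split.
      apply/sem_bigand => o; rewrite mem_iota add0n => ho; apply/sem_count.
      by rewrite hcu (nth_map 0) ?size_iota // nth_iota.
    by apply/sem_count; rewrite hct hI.
Qed.

Lemma rec_Phi : recognizable S (fun t : d.-tuple nat => exists u : m.-tuple nat, [/\ TX u, sorted leq t &
    forall q, count_mem q t = Fw [seq count_mem (q + o) u | o <- iota 0 s.+1]]).
Proof. apply: rec_ext (compile wf_Phi) => t; exact: sem_Phi. Qed.
End Main.
End Form.


Section Unif.
Variables (T T' : eqType) (Z : (nat -> T) -> Prop) (V : seq T) (f : (nat -> T) -> (nat -> T')).
Hypotheses (hZ : closed_set Z) (hV : forall x, Z x -> forall i, x i \in V) (hf : continuous_on Z f).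

Lemma bound_seq (P : T -> nat -> Prop) (W : seq T) :
  (forall v, v \in W -> exists N, forall k, N <= k -> P v k) ->
  exists N, forall v, v \in W -> forall k, N <= k -> P v k.
Proof.
elim: W => [|w W IH] h; first by exists 0.
have [N1 h1] := h w (mem_head _ _).
have [N2 h2] := IH (fun v hv => h v (@mem_behead _ (w :: W) v hv)).
exists (maxn N1 N2) => v; rewrite inE => /orP [/eqP ->|hv] k hk.
  by apply: h1; apply: leq_trans hk; exact: leq_maxl.
by apply: h2 => //; apply: leq_trans hk; exact: leq_maxr.
Qed.

Lemma unif_cont : exists m, forall x y, Z x -> Z y -> agree m x y -> f x 0 = f y 0.
Proof.
apply: NNPP => hn.
have H : forall m, exists p : (nat -> T) * (nat -> T),
    [/\ Z p.1, Z p.2, agree m p.1 p.2 & f p.1 0 <> f p.2 0].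
  move=> m; apply: NNPP => hm; apply: hn; exists m => x y hx hy ha.
  apply: NNPP => hxy; apply: hm; by exists (x, y).
pose g m := proj1_sig (constructive_indefinite_description _ (H m)).
have hg : forall m, [/\ Z (g m).1, Z (g m).2, agree m (g m).1 (g m).2 & f (g m).1 0 <> f (g m).2 0].
  by move=> m; rewrite /g; case: constructive_indefinite_description.
pose xs m := (g m).1.
have [hx0 _ _ _] := hg 0.
pose t0 := xs 0 0.
pose G (p : seq T) := forall N, exists k, N <= k /\ agree (size p) (xs k) (fun i => nth t0 p i).
have G0 : G [::] by move=> N; exists N; split.
have Gext : forall p, G p -> exists v, v \in V /\ G (rcons p v).
  move=> p hp; apply: NNPP => hne.
  have : forall v, v \in V -> exists N, forall k, N <= k ->
      ~ agree (size (rcons p v)) (xs k) (fun i => nth t0 (rcons p v) i).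
    move=> v hv; apply: NNPP => h1; apply: hne; exists v; split => // N.
    apply: NNPP => h2; apply: h1; exists N => k hk ha; apply: h2; by exists k.
  move=> /bound_seq [N hN].
  have [k [hk ha]] := hp N.
  have [hxk _ _ _] := hg k.
  apply: (hN (xs k (size p)) (hV hxk _) k hk) => i; rewrite size_rcons ltnS leq_eqVlt.
  case/orP => [/eqP ->|hi]; first by rewrite nth_rcons ltnn eqxx.
  by rewrite nth_rcons hi; apply: ha.
pose next p := epsilon (inhabits t0) (fun v => v \in V /\ G (rcons p v)).
pose pre k := iter k (fun p => rcons p (next p)) [::].
have hpre : forall k, G (pre k) /\ size (pre k) = k.
  elim=> [|k [IH hs]] //=; split; last by rewrite size_rcons hs.
  by have := epsilon_spec (inhabits t0) _ (Gext _ IH); case.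
have hpref : forall k i, i < k -> nth t0 (pre k) i = nth t0 (pre i.+1) i.
  elim=> [|k IH] i //= hi; rewrite nth_rcons (proj2 (hpre k)).
  case: (ltngtP i k) => h; first by rewrite IH.
  - by move: hi; rewrite ltnS leqNgt h.
  - by subst i; rewrite /= nth_rcons (proj2 (hpre k)) ltnn eqxx.
pose z i := nth t0 (pre i.+1) i.
have hz : forall k, agree k z (fun i => nth t0 (pre k) i) by move=> k i hi; rewrite hpref.
have hZz : Z z.
  apply: hZ => n; have [k [_ ha]] := (proj1 (hpre n)) 0.
  have [hxk _ _ _] := hg k.
  exists (xs k); split => // i hi; rewrite (hz n) //; move: (ha i); rewrite (proj2 (hpre n)).
  by move=> h; rewrite h.
have [m0 hm0] := hf hZz 1.
have [k [hk ha]] := (proj1 (hpre m0)) m0.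
have [hxk hyk hag hne] := hg k.
apply: hne.
have e1 : agree m0 z (xs k).
  move=> i hi; rewrite (hz m0) //; move: (ha i); rewrite (proj2 (hpre m0)) => h; by rewrite h.
have e2 : agree m0 z (g k).2.
  move=> i hi; rewrite e1 //; apply: hag; exact: leq_trans hi hk.
have := hm0 _ hxk e1 0 erefl; have := hm0 _ hyk e2 0 erefl.
by move=> <- <-.
Qed.
End Unif.

Lemma iter_shift (T : Type) q (x : nat -> T) i : iter q (@shift T) x i = x (q + i).
Proof. by elim: q i => //= q IH i; rewrite /shift IH addSnnS. Qed.

Lemma supp_bound (u v : nat -> nat) r M N k :
  (forall q, v q != 0 -> exists2 o, o <= r & u (q + o) != 0) ->
  (forall q, v q <= M) -> (forall j, N <= j -> u j = 0) -> \sum_(j < N) u j <= k ->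
  (forall j, N <= j -> v j = 0) /\ \sum_(j < N) v j <= M * r.+1 * k.
Proof.
move=> hvu hM hN hk; split.
  move=> j hj; apply/eqP; apply: contraT => /hvu [o _]; rewrite hN ?eqxx //.
  exact: leq_trans hj (leq_addr _ _).
have shift1 : forall (g : nat -> nat) N, g N = 0 -> \sum_(j < N) g j.+1 <= \sum_(j < N) g j.
  move=> g N' hg.
  have E1 : \sum_(i < N'.+1) g i = g 0 + \sum_(i < N') g i.+1 by rewrite big_ord_recl.
  have E2 : \sum_(i < N'.+1) g i = \sum_(i < N') g i + g N' by rewrite big_ord_recr.
  lia.
have shiftk : forall o, \sum_(j < N) (u (j + o) != 0 : nat) <= \sum_(j < N) (u j != 0 : nat).
  elim=> [|o IH]; first by apply: leq_sum => j _; rewrite addn0.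
  apply: leq_trans IH; apply: leq_trans (shift1 (fun j => (u (j + o) != 0 : nat)) N _).
    by apply: leq_sum => j _; rewrite addSnnS.
  by rewrite hN ?eqxx // leq_addr.
have h1 : \sum_(j < N) v j <= \sum_(j < N) M * \sum_(o < r.+1) (u (j + o) != 0 : nat).
  apply: leq_sum => j _; case: (eqVneq (v j) 0) => [->//|/hvu [o ho hu]].
  apply: leq_trans (hM j) _; rewrite -{1}(muln1 M) leq_mul2l; apply/orP; right.
  rewrite (bigD1 (Ordinal (ho : o < r.+1))) //= hu; exact: leq_addr.
apply: leq_trans h1 _; rewrite -big_distrr /= -mulnA leq_mul2l; apply/orP; right.
rewrite exchange_big /=; apply: leq_trans (_ : \sum_(o < r.+1) \sum_(j < N) (u j != 0 : nat) <= _).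
  by apply: leq_sum => o _; apply: shiftk.
rewrite sum_nat_const card_ord leq_mul2l; apply/orP; right.
apply: leq_trans hk; apply: leq_sum => j _; by case: (u j).
Qed.

Lemma sum_count (t : seq nat) N : (forall x, x \in t -> x < N) ->
  \sum_(j < N) count_mem (j : nat) t = size t.
Proof.
elim: t => [|x t IH] h /=; first by rewrite big1.
rewrite big_split /= IH; last by move=> y hy; apply: h; rewrite inE hy orbT.
have hx : x < N by apply: h; rewrite inE eqxx.
rewrite (bigD1 (Ordinal hx)) //= eqxx big1 ?addn0 ?add1n // => j hj.
apply/eqP; rewrite eqb0; apply: contra hj => /eqP h1; apply/eqP; exact: val_inj.
Qed.

Lemma nu_exists (x : nat -> nat) N : (forall j, N <= j -> x j = 0) ->
  exists u : (\sum_(j < N) x j).-tuple nat, is_nu x u.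
Proof.
move=> hN.
pose g n := flatten [seq nseq (x j) j | j <- iota 0 n].
have gS : forall n, g n.+1 = g n ++ nseq (x n) n.
  by move=> n; rewrite /g -addn1 iotaD map_cat flatten_cat /= cats0.
have hc : forall n j, count_mem j (g n) = if j < n then x j else 0.
  elim=> [|n IH] j //; rewrite gS count_cat IH count_nseq ltnS.
  case: (ltngtP j n) => [h|h|->] /=.
  - by rewrite eq_sym (ltn_eqF h) mul0n addn0.
  - by rewrite (ltn_eqF h) mul0n.
  - by rewrite eqxx mul1n.
have hs : forall n, size (g n) = \sum_(j < n) x j.
  elim=> [|n0 IH]; first by rewrite big_ord0.
  by rewrite gS size_cat size_nseq IH big_ord_recr.
pose l := sort leq (g N).
have hl : size l == \sum_(j < N) x j by rewrite size_sort hs.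
exists (Tuple hl); split; first exact: (sort_sorted leq_total).
move=> j /=; rewrite /l (permP (permEl (perm_sort leq (g N)))) hc.
by case: ltnP => // /hN.
Qed.

Lemma resp (T T' : Type) (Z : (nat -> T) -> Prop) (f : (nat -> T) -> nat -> T') x x' :
  continuous_on Z f -> Z x -> Z x' -> x =1 x' -> f x =1 f x'.
Proof.
move=> hc hx hx' E i; have [m hm] := hc x hx i.+1.
by apply: (hm x' hx') => //; move=> j _; rewrite E.
Qed.

Lemma rec_or S n (P Q : n.-tuple nat -> Prop) : addable S ->
  recognizable S P -> recognizable S Q -> recognizable S (fun t => P t \/ Q t).
Proof.
move=> ha hP hQ; have := rec_not ha (rec_and (rec_not ha hP) (rec_not ha hQ)).
by apply: rec_ext => t; tauto.
Qed.

Lemma rec_bigunion S n (P : nat -> n.-tuple nat -> Prop) D : addable S ->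
  (forall m, recognizable S (P m)) -> recognizable S (fun t => exists m, m <= D /\ P m t).
Proof.
move=> ha hP; elim: D => [|D IH].
  apply: rec_ext (hP 0) => t; split; first by exists 0.
  case=> m [hm h]; by have -> : 0 = m by lia.
apply: rec_ext (rec_or ha IH (hP D.+1)) => t; split.
  case=> [[m [hm h]]|h]; [exists m; split => //; exact: leq_trans hm _|by exists D.+1].
case=> m [hm h]; case: (ltnP D m) => hDm; last by left; exists m.
by right; have -> : D.+1 = m by lia.
Qed.

Lemma leq_foldr_max (t : seq nat) x : x \in t -> x <= foldr maxn 0 t.
Proof.
elim: t => //= y t IH; rewrite inE => /orP [/eqP ->|/IH h]; first exact: leq_maxl.
exact: leq_trans h (leq_maxr _ _).
Qed.

Lemma ysum_nu (y : nat -> nat) d (t : d.-tuple nat) s :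
  is_nu y t -> ysum y s -> s = d.
Proof.
move=> [_ hc] [N [hN <-]].
have ht : forall x, x \in t -> x < N.
  move=> x hx; rewrite ltnNge; apply/negP => /hN; rewrite hc => /eqP.
  by move=> h0; move: hx; rewrite -has_pred1 has_count (eqP h0).
rewrite (eq_bigr (fun j : 'I_N => count_mem (j : nat) t)) ?sum_count ?size_tuple // => j _.
Qed.

Lemma ysum_of_nu (y : nat -> nat) d (t : d.-tuple nat) : is_nu y t -> ysum y d.
Proof.
move=> [_ hc]; exists (foldr maxn 0 t).+1; split.
  move=> j hj; rewrite hc; apply/count_memPn; apply/negP => /leq_foldr_max; lia.
rewrite (eq_bigr (fun j : 'I_(foldr maxn 0 t).+1 => count_mem (j : nat) t)) ?sum_count ?size_tuple //.
by move=> x /leq_foldr_max.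
Qed.

Section MainThm.
Variables (S : ANS) (X : (nat -> nat) -> Prop) (B : finType) (Y : (nat -> B) -> Prop)
  (phi : (nat -> B) -> (nat -> nat)) (psi : (nat -> nat) -> (nat -> B)) (b : B) (A : seq nat).
Hypotheses (ha : addable S) (hXc : closed_set X) (hXsh : forall x, X x -> X (shift x))
  (hAX : forall x, X x -> forall i, x i \in A)
  (hYsh : forall y, Y y -> Y (shift y)) (hYb : Y (fun _ => b))
  (hphib : phi (fun _ => b) =1 (fun _ => 0)).
Hypotheses (hXphi : forall y, Y y -> X (phi y))
  (hcomm : forall y, Y y -> phi (shift y) =1 shift (phi y))
  (hcphi : continuous_on Y phi)
  (hYpsi : forall x, X x -> Y (psi x))
  (hpsiphi : forall y, Y y -> psi (phi y) =1 y)
  (hphipsi : forall x, X x -> phi (psi x) =1 x)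
  (hcpsi : continuous_on X psi).
Variables (s r : nat).
Hypotheses (hws : forall x x', X x -> X x' -> agree s x x' -> psi x 0 = psi x' 0)
  (hwr : forall y y', Y y -> Y y' -> agree r y y' -> phi y 0 = phi y' 0).
Variable pi : B -> 'I_#|B|.
Hypotheses (hpi : bijective pi) (hpib : val (pi b) = 0).

Lemma X0 : X (fun _ => 0).
Proof.
apply: hXc => n; exists (phi (fun _ => b)); split; first exact: hXphi.
by move=> i _; rewrite hphib.
Qed.

Lemma psi0 : psi (fun _ => 0) =1 (fun _ => b).
Proof.
move=> i; rewrite (@resp _ _ _ _ (fun _ => 0) (phi (fun _ => b)) hcpsi X0 (hXphi hYb)) ?hpsiphi //.

Qed.

Lemma Xiter x q : X x -> X (iter q (@shift nat) x).
Proof. by elim: q => //= q IH hx; apply: hXsh; apply: IH. Qed.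
Lemma Yiter y q : Y y -> Y (iter q (@shift B) y).
Proof. by elim: q => //= q IH hy; apply: hYsh; apply: IH. Qed.

Lemma psi_comm x : X x -> psi (shift x) =1 shift (psi x).
Proof.
move=> hx; set y := psi x; have hy : Y y := hYpsi hx.
have E : shift x =1 phi (shift y).
  by move=> i; rewrite hcomm // /shift hphipsi.
move=> i; rewrite (resp hcpsi (hXsh hx) (hXphi (hYsh hy)) E) hpsiphi //; exact: hYsh.
Qed.

Lemma psi_iter x q : X x -> psi x q = psi (iter q (@shift nat) x) 0.
Proof.
elim: q x => // q IH x hx; rewrite iterSr -IH; last exact: hXsh.
by rewrite psi_comm.
Qed.

Lemma phi_iter y q : Y y -> phi y q = phi (iter q (@shift B) y) 0.
Proof.
elim: q y => // q IH y hy; rewrite iterSr -IH; last exact: hYsh.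
by rewrite hcomm.
Qed.

Lemma psi_loc x x' q q' : X x -> X x' -> (forall o, o < s -> x (q + o) = x' (q' + o)) ->
  psi x q = psi x' q'.
Proof.
move=> hx hx' h; rewrite (psi_iter q hx) (psi_iter q' hx'); apply: hws; try exact: Xiter.
by move=> o ho; rewrite !iter_shift h.
Qed.

Lemma psi_zero x q : X x -> (forall o, o < s -> x (q + o) = 0) -> psi x q = b.
Proof.
move=> hx h; rewrite (@psi_loc x (fun _ => 0) q 0 hx X0) ?psi0 // => o ho; exact: h.
Qed.

Lemma phi_zero y q : Y y -> (forall o, o < r -> y (q + o) = b) -> phi y q = 0.
Proof.
move=> hy h; rewrite (phi_iter q hy) (@hwr _ (fun _ => b)) ?hphib //; first exact: Yiter.
by move=> o ho; rewrite iter_shift h.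
Qed.

Lemma pi0 c : (val (pi c) == 0) = (c == b).
Proof.
apply/eqP/eqP => [h|->//]; apply: (bij_inj hpi); apply: val_inj; by rewrite /= h.
Qed.

Definition Fw (cs : seq nat) : nat :=
  val (pi (psi (epsilon (inhabits (fun _ : nat => 0))
    (fun x => X x /\ forall o, o < s -> x o = nth 0 cs o)) 0)).

Lemma Fw_ok x q : X x -> Fw [seq x (q + o) | o <- iota 0 s.+1] = val (pi (psi x q)).
Proof.
move=> hx; rewrite /Fw.
set P := fun x' : nat -> nat => _.
have hP : exists x', P x'.
  exists (iter q (@shift nat) x); split; first exact: Xiter.
  move=> o ho; rewrite iter_shift (nth_map 0) ?size_iota; last by lia.
  by rewrite nth_iota //; lia.
have [hx' h'] := epsilon_spec (inhabits (fun _ => 0)) P hP.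
congr (val (pi _)); symmetry; apply: psi_loc => // o ho.
rewrite add0n h' // (nth_map 0) ?size_iota; last by lia.
by rewrite nth_iota //; lia.
Qed.

Definition Mx := foldr maxn 0 A.
Lemma hMx x i : X x -> x i <= Mx.
Proof. move=> hx; apply: leq_foldr_max; exact: hAX. Qed.

Definition TXm m (u : m.-tuple nat) :=
  exists x, [/\ X x, (exists s', s' <= m /\ ysum x s') & is_nu x u].
Definition TYk k d (t : d.-tuple nat) :=
  exists y, [/\ relabel pi Y y, (exists s', s' <= k /\ ysum y s') & is_nu y t].
Definition Pm m d (t : d.-tuple nat) := exists u : m.-tuple nat, [/\ TXm u, sorted leq t &
    forall q, count_mem q t = Fw [seq count_mem (q + o) u | o <- iota 0 s.+1]].

Lemma key k d (t : d.-tuple nat) : d <= k ->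
  (TYk k t <-> exists m, m <= Mx * r.+1 * k /\ Pm m t).
Proof.
move=> hdk; split.
- case=> y [[y0 [hy0 hy]] [s' [hs' [N [hN hsum]]]] [hsort hcnt]].
  set x := phi y0; have hx : X x := hXphi hy0.
  have [hxN hxs] : (forall j, N <= j -> x j = 0) /\ \sum_(j < N) x j <= Mx * r.+1 * k.
    apply: (@supp_bound y x r Mx N k) => //.
    - move=> q hq; apply: NNPP => hn; move: hq; rewrite /x phi_zero ?eqxx //.
      move=> o ho; apply/eqP; rewrite -pi0 -hy; apply/negPn/negP => hne.
      apply: hn; exists o => //; exact: ltnW.
    - by move=> q; apply: hMx.
    - by rewrite hsum.
  have [u hu] := nu_exists hxN.
  exists (\sum_(j < N) x j); split => //; exists u; split => //.
    exists x; split => //; exists (\sum_(j < N) x j); split => //; exists N; split => //.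
  move=> q; rewrite -hcnt hy.
  have -> : y0 q = psi x q by rewrite /x hpsiphi.
  rewrite -Fw_ok //; congr Fw; apply: eq_map => o; by case: hu => _ ->.
- case=> m [_ [u [[x [hx _ [_ hxu]]] hsort hcnt]]].
  exists (fun i => val (pi (psi x i))).
  have hc : forall j, val (pi (psi x j)) = count_mem j t.
    by move=> j; rewrite hcnt -Fw_ok //; congr Fw; apply: eq_map => o; rewrite hxu.
  have hnu : is_nu (fun i => val (pi (psi x i))) t by split.
  split => //.
    by exists (psi x); split => //; exact: hYpsi.
  by exists d; split => //; exact: ysum_of_nu hnu.
Qed.

Lemma weak_Y : weakly_codable S X -> weakly_codable S (relabel pi Y).
Proof.
move=> hX k d.
case: (leqP d k) => hdk.
  have hP : forall m, recognizable S (@Pm m d).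
    move=> m; exact: (rec_Phi ha d s Fw (hX m m)).
  apply: rec_ext (rec_bigunion (Mx * r.+1 * k) ha hP) => t.
  by rewrite -(key t hdk).
apply: rec_ext (rec_not ha (rec_valid d ha)) => t; split; first by move=> h; exfalso; exact: h.
case=> y [_ [s' [hs' hys]] hnu] _; have := ysum_nu hnu hys; lia.
Qed.

Lemma dim_Y : finite_coding_dim X -> finite_coding_dim (relabel pi Y).
Proof.
case=> dX hdX; exists (#|B| * s.+1 * dX) => y [y0 [hy0 hy]].
set x := phi y0; have hx : X x := hXphi hy0.
have [s'' [hs'' [N [hN hsum]]]] := hdX x hx.
have [hyN hys] : (forall j, N <= j -> y j = 0) /\ \sum_(j < N) y j <= #|B| * s.+1 * dX.
  apply: (@supp_bound x y s #|B| N dX) => //.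
  - move=> q hq; apply: NNPP => hn; move: hq; rewrite hy pi0.
    have -> : y0 q = psi x q by rewrite /x hpsiphi.
    rewrite psi_zero ?eqxx // => o ho; apply/eqP; apply/negPn/negP => hne.
    apply: hn; exists o => //; exact: ltnW.
  - by move=> q; rewrite hy; exact: ltnW (ltn_ord _).
  - by rewrite hsum.
by exists (\sum_(j < N) y j); split => //; exists N.
Qed.
End MainThm.


Theorem mainTheorem16 (S : ANS) (X : (nat -> nat) -> Prop)
  (B : finType) (Y : (nat -> B) -> Prop) (phi : (nat -> B) -> (nat -> nat)) (b : B) :
  addable S ->
  subshift X ->
  (exists A : seq nat, 0 \in A /\ forall x, X x -> forall i, x i \in A) ->
  subshift Y ->
  conjugacy Y X phi ->
  Y (fun _ => b) ->
  phi (fun _ => b) =1 (fun _ => 0) ->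
  (weakly_codable S X ->
     forall pi : B -> 'I_#|B|, bijective pi -> val (pi b) = 0 ->
       weakly_codable S (relabel pi Y)) /\
  (codable S X ->
     forall pi : B -> 'I_#|B|, bijective pi -> val (pi b) = 0 ->
       codable S (relabel pi Y)).
Proof.
move=> ha [hXc hXsh] [A [hA0 hAX]] [hYc hYsh]
  [hXphi hcomm hcphi [psi [hYpsi hpsiphi hphipsi hcpsi]]] hYb hphib.
have [s hs] := unif_cont hXc hAX hcpsi.
have hB : forall y : nat -> B, Y y -> forall i, y i \in enum B by move=> y _ i; rewrite mem_enum.
have [r hr] := unif_cont hYc hB hcphi.
split.
- move=> hX pi hpi hpib.
  by eapply weak_Y; eassumption.
- move=> [hX hd] pi hpi hpib; split.
    by eapply weak_Y; eassumption.
  by eapply dim_Y; eassumption.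
Qed.
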